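(* Let $T$ be a nonempty rooted tree (labelled, unlabelled planar, or unlabelled non-planar), $G=U(T)$ its underlying graph, and $U\colon X^T\to X^G$ the simplicial map sending $(F;L_0\supseteq\cdots\supseteq L_n)$ to $(U(F);L_0\setminus L_1,\dots,L_{n-1}\setminus L_n)$. Then $U$ is relatively Segal if and only if $T$ has exactly one vertex.
   Context: Rooted trees and $X^T$: A rooted tree $T$ is a finite tree with a distinguished root vertex; its vertex set is partially ordered by $v\le w$ iff $v$ lies on the path from the root to $w$; a planar rooted tree additionally carries a total order on the upward edges at each vertex. A rooted forest is a disjoint union of rooted trees. For a vertex subset $S$, the subforest spanned by $S$ ($H|_S$) has vertex set $S$, the edges with both endpoints in $S$, and the induced structure. A subset $L$ defines a lower subforest if $w\in L$, $v\le w$ imply $v\in L$. For $n\ge1$ a layering of $n-1$ cuts of a forest $F$ is a chain $V(F)=L_0\supseteq\cdots\supseteq L_n=\varnothing$ of subsets each defining a lower subforest. An admissible subforest of $T$ is the subforest spanned by $L_i\setminus L_j$ ($i\le j$) for a layering of $T$. $X^T_0$ is a point; $X^T_n$ ($n\ge1$) is the set of pairs $(H;L_0\supseteq\cdots\supseteq L_n)$ with $H$ admissible and $L_\bullet$ a layering of $H$; for $n\ge2$, $d_0(H;L_\bullet)=(H|_{L_1};L_1\supseteq\cdots\supseteq L_n)$, $d_n(H;L_\bullet)=(H|_{L_0\setminus L_{n-1}};L_0\setminus L_{n-1}\supseteq\cdots\supseteq L_{n-1}\setminus L_{n-1})$, $d_i$ ($0<i<n$) deletes $L_i$, and $s_i$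 repeats $L_i$. In the unlabelled versions one takes isomorphism classes of such pairs under isomorphisms of rooted forests (planar-structure preserving in the planar case) carrying each $L_i$ onto $L'_i$. Graphs and $X^G$: For a finite graph $G$, a subgraph is a vertex subset with a set of edges having endpoints in it. $X^G_0=\{\varnothing\}$; $X^G_1$ is the set of subgraphs of $G$; $X^G_n$ ($n\ge1$) is the set of tuples $(H;S_1,\dots,S_n)$ with $H$ a subgraph and $S_1,\dots,S_n$ a partition of $V(H)$ into possibly empty disjoint sets; $d_0$ and $d_n$ delete $S_1$, resp. $S_n$, together with these vertices and incident edges from $H$; $d_i$ ($1\le i\le n-1$) merges $S_i$ and $S_{i+1}$; $s_i$ inserts $\varnothing$ after $S_i$. For unlabelled $G$ one takes isomorphism classes of tuples under graph isomorphisms preserving the parts. A map $f\colon X\to Y$ of simplicial sets with $X_0,Y_0$ singletons is relatively Segal if for each $n\ge2$ the commutative square with top $f_n\colon X_n\to Y_n$, bottom $f_1\times\cdots\times f_1\colon X_1^{\times n}\to Y_1^{\times n}$, and vertical arrows the Segal maps $X_n\to X_1\times\cdots\times X_1$, $Y_n\to Y_1\times\cdots\times Y_1$ (restriction to the $n$ consecutive edges $\{i-1,i\}$), is a pullback of sets. *)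

(* Defs.v *)
From mathcomp Require Import all_boot.
Set Implicit Arguments. Unset Strict Implicit. Unset Printing Implicit Defensive.

(* A rooted tree on the finite vertex type V is encoded by its root r and its
   parent function p (p r = r; every vertex reaches r by iterating p). *)

Section Trees.
Variables (V : finType) (r : V) (p : V -> V) (ord : rel V).

Definition is_rooted_tree : Prop :=
  p r = r /\ forall v, exists k, iter k p v = r.

Definition planar_structure : Prop :=
  forall u v w, u != r -> v != r -> w != r -> p u = p v -> p v = p w ->
    [/\ ~~ ord u u, (ord u v -> ord v w -> ord u w) & (u != v -> ord u v || ord v u)].

(* order of the subforest spanned by S: v <= w iff v lies on the path from
   the root of w's component (in the induced forest) to w *)
Definition le_in (S : {set V}) (v w : V) : Prop :=
  v \in S /\ w \in S /\
  exists k, iter k p w = v /\ forall j, j <= k -> iter j p w \in S.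

Definition lower_in (S L : {set V}) : Prop :=
  L \subset S /\ forall v w, w \in L -> le_in S v w -> v \in L.

Definition layering (S : {set V}) (n : nat) (L : seq {set V}) : Prop :=
  [/\ 1 <= n, size L = n.+1, nth set0 L 0 = S & nth set0 L n = set0] /\
  (forall i, i <= n -> lower_in S (nth set0 L i)) /\
  (forall i, i < n -> nth set0 L i.+1 \subset nth set0 L i).

(* vertex sets of admissible subforests of T *)
Definition admissible (S : {set V}) : Prop :=
  exists n L i j, [/\ layering setT n L, i <= j, j <= n &
                      S = nth set0 L i :\: nth set0 L j].

(* raw simplices of X^T: (vertex set of H; L_0, ..., L_n) *)
Definition rawT := ({set V} * seq {set V})%type.

Definition validT (n : nat) (x : rawT) : Prop :=
  admissible x.1 /\ layering x.1 n x.2.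

Definition layer (L : seq {set V}) (i : nat) : {set V} :=
  nth set0 L i :\: nth set0 L i.+1.

(* i-th Segal edge {i, i+1} (0-based) of a simplex of X^T *)
Definition segT (x : rawT) (i : nat) : rawT :=
  (layer x.2 i, [:: layer x.2 i; set0]).

Definition tree_edges : {set {set V}} :=
  [set [set w; p w] | w in [set w | w != r]].

(* raw simplices of X^G: (V(H), E(H); S_1, ..., S_n) *)
Definition rawG := ({set V} * {set {set V}} * seq {set V})%type.

Definition validG (n : nat) (y : rawG) : Prop :=
  let '(VH, E, P) := y in
  [/\ E \subset tree_edges,
      (forall e, e \in E -> e \subset VH),
      size P = n,
      (forall i j, i < n -> j < n -> i != j ->
         [disjoint nth set0 P i & nth set0 P j]) &
      \bigcup_(A <- P) A = VH].

(* i-th Segal edge (0-based) of a simplex of X^G *)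
Definition segG (y : rawG) (i : nat) : rawG :=
  let '(VH, E, P) := y in
  (nth set0 P i, [set e in E | e \subset nth set0 P i], [:: nth set0 P i]).

Definition UT (n : nat) (x : rawT) : rawG :=
  (x.1, [set e in tree_edges | e \subset x.1], [seq layer x.2 k | k <- iota 0 n]).

Definition parS (S : {set V}) (v w : V) : bool :=
  [&& v \in S, w \in S, w != r & p w == v].

Definition forest_iso (planar : bool) (x x' : rawT) : Prop :=
  exists phi : V -> V,
    [/\ {in x.1 &, injective phi},
        phi @: x.1 = x'.1 &
        (forall v w, v \in x.1 -> w \in x.1 ->
            parS x.1 v w = parS x'.1 (phi v) (phi w))] /\
    [/\ size x.2 = size x'.2,
        (forall k, phi @: nth set0 x.2 k = nth set0 x'.2 k) &
        (planar -> forall v u w, parS x.1 v u -> parS x.1 v w ->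
            ord u w = ord (phi u) (phi w))].

Definition graph_iso (y y' : rawG) : Prop :=
  let '(VH, E, P) := y in
  let '(VH', E', P') := y' in
  exists phi : V -> V,
    [/\ {in VH &, injective phi},
        phi @: VH = VH',
        [set phi @: (e : {set V}) | e in E] = E',
        size P = size P' &
        (forall k, phi @: nth set0 P k = nth set0 P' k)].

End Trees.

Inductive flavor := Labelled | UnlabelledPlanar | UnlabelledNonPlanar.

Section Segal.
Variables (V : finType) (r : V) (p : V -> V) (ord : rel V).

(* identification of simplices: equality (labelled) or isomorphism
   (unlabelled); elements of X_n are the classes of valid raw simplices *)
Definition isoT (fl : flavor) (x x' : rawT V) : Prop :=
  match fl with
  | Labelled => x = x'
  | UnlabelledPlanar => forest_iso r p ord true x x'
  | UnlabelledNonPlanar => forest_iso r p ord false x x'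
  end.

Definition isoG (fl : flavor) (y y' : rawG V) : Prop :=
  match fl with
  | Labelled => y = y'
  | _ => graph_iso y y'
  end.

(* U : X^T -> X^G is relatively Segal: for every n >= 2 the canonical map
   X_n -> Y_n x_{Y_1^n} X_1^n is a bijection (the square is a pullback),
   written on representatives of the classes. *)
Definition relSegal (fl : flavor) : Prop :=
  forall n, 2 <= n ->
  forall y : rawG V, validG r p n y ->
  forall xs : nat -> rawT V,
    (forall i, i < n -> validT p 1 (xs i)) ->
    (forall i, i < n -> isoG fl (UT r p 1 (xs i)) (segG y i)) ->
    (exists x, [/\ validT p n x, isoG fl (UT r p n x) y &
                   forall i, i < n -> isoT fl (segT x i) (xs i)]) /\
    (forall x x', validT p n x -> validT p n x' ->
       isoG fl (UT r p n x) y -> isoG fl (UT r p n x') y ->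
       (forall i, i < n -> isoT fl (segT x i) (xs i)) ->
       (forall i, i < n -> isoT fl (segT x' i) (xs i)) ->
       isoT fl x x').

End Segal.

(* Main.v *)
Require Import Defs.
From mathcomp Require Import all_boot.
From Stdlib Require Import Classical.
From mathcomp Require Import zify.
Set Implicit Arguments. Unset Strict Implicit. Unset Printing Implicit Defensive.

Section Gen.
Variables (V : finType) (r : V) (p : V -> V).
Hypothesis tree : is_rooted_tree r p.

Lemma iter_r k : iter k p r = r.
Proof. by case: tree => pr _; elim: k => //= k ->. Qed.

Lemma pw_neq w : w != r -> p w != w.
Proof.
move=> wr; apply/eqP => pw; case: tree => _ /(_ w) [k hk].
have : iter k p w = w by elim: k {hk} => //= k ->.
by rewrite hk => /esym/eqP; rewrite (negbTE wr).
Qed.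

Lemma ppw_neq w : w != r -> p w != r -> p (p w) != w.
Proof.
move=> wr pwr; apply/eqP => ppw; case: tree => _ /(_ w) [k hk].
have : iter k p w = w \/ iter k p w = p w.
  elim: k {hk} => [|k /= [->|->]]; by [left|right|left].
by rewrite hk => -[] /esym/eqP; rewrite ?(negbTE wr) ?(negbTE pwr).
Qed.

Lemma child_exists v : v != r -> exists w, w != r /\ p w = r.
Proof.
move=> vr; case: tree => _ /(_ v) [k hk].
have ex : exists k, iter k p v == r by exists k; apply/eqP.
case: (ex_minnP ex) => m /eqP hm minm.
case: m hm minm => [|m] hm minm; first by rewrite /= in hm; rewrite hm eqxx in vr.
exists (iter m p v); split => //.
by apply/negP => /minm; rewrite ltnn.
Qed.

Lemma edge_inv e : e \in tree_edges r p -> exists2 w, w != r & e = [set w; p w].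
Proof. by case/imsetP => w; rewrite inE => wr ->; exists w. Qed.

Lemma edge_not_sub1 e a : e \in tree_edges r p -> ~~ (e \subset [set a]).
Proof.
case/edge_inv => w wr ->; apply/negP; rewrite subUset !sub1set !inE.
by case/andP => /eqP h1 /eqP h2; move: (pw_neq wr); rewrite h2 h1 eqxx.
Qed.

Lemma edge_sub2 e a b : e \in tree_edges r p -> e \subset [set a; b] -> e = [set a; b].
Proof.
case/edge_inv => w wr ->; rewrite subUset !sub1set !inE => /andP[h1 h2].
have := pw_neq wr.
case/orP: h1 => /eqP h1; case/orP: h2 => /eqP h2; rewrite h2 h1 ?eqxx // => _.
by rewrite setUC.
Qed.

Lemma tree_edges_in w : w != r -> [set w; p w] \in tree_edges r p.
Proof. by move=> wr; apply/imsetP; exists w; rewrite ?inE. Qed.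


Lemma imset_fix (T : finType) (f : T -> T) (A : {set T}) :
  (forall x, f x = x) -> f @: A = A.
Proof. by move=> hf; rewrite (eq_imset A hf) imset_id. Qed.

Lemma lower_SS S : lower_in p S S.
Proof. by split => // v w _ [hv _]. Qed.

Lemma lower_S0 S : lower_in p S set0.
Proof. by split; [exact: sub0set| move=> v w; rewrite inE]. Qed.

Lemma layering1 S : layering p S 1 [:: S; set0].
Proof.
split; first by [].
split; last by case=> //= _; exact: sub0set.
by case=> [|[|i]] //= _; [exact: lower_SS | exact: lower_S0].
Qed.

Lemma adm_setT : admissible p setT.
Proof. by exists 1, [:: setT; set0], 0, 1; split => //; [exact: layering1|rewrite setD0]. Qed.

Lemma adm_set0 : admissible p set0.
Proof. by exists 1, [:: setT; set0], 0, 0; split => //; [exact: layering1|rewrite setDv]. Qed.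

Lemma adm_r : admissible p [set r].
Proof.
exists 2, [:: setT; [set r]; set0], 1, 2; split => //; last by rewrite setD0.
split; first by [].
split; last by case=> [|[|i]] //= _; rewrite ?subsetT ?sub0set.
case=> [|[|[|i]]] //= _; try exact: lower_SS; try exact: lower_S0.
split; first exact: subsetT.
move=> v w; rewrite inE => /eqP -> [_ [_ [k [hk _]]]].
by rewrite inE -hk iter_r.
Qed.

Lemma adm_child w : w != r -> p w = r -> admissible p [set w].
Proof.
move=> wr pw.
exists 3, [:: setT; [set r; w]; [set r]; set0], 1, 2; split => //; last first.
  apply/setP => v; rewrite !inE; case: (v =P w) => [->|/eqP vw].
    by rewrite wr orbT.
  by rewrite orbF; case: (v == r).
split; first by [].
split; last first.
  case=> [|[|[|i]]] //= _; rewrite ?subsetT ?sub0set //.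
  by rewrite sub1set !inE eqxx.
case=> [|[|[|[|i]]]] //= _; try exact: lower_SS; try exact: lower_S0.
- split; first exact: subsetT.
  move=> v w'; rewrite !inE => /orP[] /eqP -> [_ [_ [k [hk _]]]].
    by rewrite -hk iter_r eqxx.
  case: k hk => [|k]; first by move=> <-; rewrite eqxx orbT.
  by rewrite iterSr pw iter_r => <-; rewrite eqxx.
- split; first exact: subsetT.
  move=> v w'; rewrite inE => /eqP -> [_ [_ [k [hk _]]]].
  by rewrite inE -hk iter_r.
Qed.

Lemma graph_iso_refl (y : rawG V) : graph_iso y y.
Proof.
case: y => [[VH E] P]; exists id; split => //.
- exact: imset_fix.
- by apply: imset_fix => e; exact: imset_fix.
- by move=> k; exact: imset_fix.
Qed.

Lemma isoG_refl fl (y : rawG V) : isoG fl y y.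
Proof. by case: fl => //=; exact: graph_iso_refl. Qed.

Lemma isoT_refl ord fl (x : rawT V) : isoT r p ord fl x x.
Proof.
case: fl => //=; exists id; (split; [split => //; exact: imset_fix|
   split => //; move=> k; exact: imset_fix]).
Qed.

End Gen.

Lemma setDUK' (T : finType) (A B : {set T}) : B \subset A -> (A :\: B) :|: B = A.
Proof.
move=> sub; apply/setP=> v; rewrite !inE; case: (boolP (v \in B)) => h /=.
  by rewrite ?orbT (subsetP sub).
by rewrite ?orbF ?andbT.
Qed.

Lemma one_uniq (V : finType) (r : V) p n (x x' : rawT V) :
  validT p n x -> validT p n x' -> UT r p n x = UT r p n x' -> x = x'.
Proof.
case: x => S L; case: x' => S' L'.
move=> [_ [[hn hs h0 hn0] [hlow hdec]]] [_ [[_ hs' h0' hn0'] [hlow' hdec']]] /= [eS _ eP].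
have hlay k : k < n -> layer L k = layer L' k.
  move=> kn; have := congr1 (fun s => nth set0 s k) eP.
  by rewrite /= !(nth_map 0) ?size_iota // nth_iota.
have key m : m <= n -> nth set0 L (n - m) = nth set0 L' (n - m).
  elim: m => [|m IH] hm; first by rewrite subn0 hn0 hn0'.
  have e : n - m = (n - m.+1).+1 by lia.
  have kn : n - m.+1 < n by lia.
  rewrite -(setDUK' (hdec _ kn)) -(setDUK' (hdec' _ kn)).
  have := hlay _ kn; rewrite /layer => ->.
  by rewrite -e IH // ltnW.
rewrite /= in eS; rewrite eS; congr pair.
apply: (eq_from_nth (x0 := set0)); first by rewrite hs hs'.
move=> i; rewrite hs ltnS => hi.
have := key (n - i); rewrite subKn // => ->//; exact: leq_subr.
Qed.

Section One.
Variables (V : finType) (r : V) (p : V -> V) (ord : rel V).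
Hypothesis allq : forall u v : V, u = v.

Lemma fixall (f : V -> V) x : f x = x.
Proof. exact: allq. Qed.

Lemma isoG_eq fl (y y' : rawG V) : isoG fl y y' -> y = y'.
Proof.
case: fl => //= ; case: y => [[VH E] P]; case: y' => [[VH' E'] P'];
move=> [phi [inj him hE hs hP]];
(rewrite imset_fix in him; last exact: fixall);
(rewrite (eq_imset E (fun e => imset_fix e (fixall phi))) imset_id in hE);
subst; congr pair;
apply: (eq_from_nth (x0 := set0)) => // k _; rewrite -hP imset_fix //; exact: fixall.
Qed.

Lemma isoT_eq fl (x x' : rawT V) : isoT r p ord fl x x' -> x = x'.
Proof.
case: fl => //= ; case: x => S L; case: x' => S' L';
move=> [phi [[inj hS hpar] [hs hL _]]]; simpl in *;
(have eS : S = S' by rewrite -hS imset_fix //; exact: fixall);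
rewrite eS; congr pair;
apply: (eq_from_nth (x0 := set0)) => // k _; rewrite -hL imset_fix //; exact: fixall.
Qed.

Lemma tree_edges0 : tree_edges r p = set0.
Proof.
apply/setP => e; rewrite inE; apply/negP => /imsetP [w]; rewrite inE.
by rewrite (allq w r) eqxx.
Qed.

Lemma one_ex n (y : rawG V) xs : 1 <= n -> validG r p n y ->
  (forall i, i < n -> validT p 1 (xs i)) ->
  (forall i, i < n -> UT r p 1 (xs i) = segG y i) ->
  exists x, [/\ validT p n x, UT r p n x = y & forall i, i < n -> segT x i = xs i].
Proof.
case: y => [[VH E] P] hn [hE hEV hsz hdisj hU] hxs hseg.
pose Lf k := \bigcup_(A <- drop k P) A.
have Lfbig k : n <= k -> Lf k = set0.
  by move=> nk; rewrite /Lf drop_oversize ?hsz // big_nil.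
have LfS k : k < n -> Lf k = nth set0 P k :|: Lf k.+1.
  by move=> kn; rewrite /Lf (drop_nth set0) ?hsz // big_cons.
have Lfstep k : Lf k.+1 \subset Lf k.
  case: (ltnP k n) => kn; first by rewrite (LfS _ kn) subsetUr.
  by rewrite (Lfbig k.+1) ?sub0set // leqW.
have Lfmono k : Lf k \subset Lf 0.
  elim: k => // k IH; exact: subset_trans (Lfstep k) IH.
have memLf v : forall m k, n - k <= m -> v \in Lf k ->
    exists2 j, k <= j < n & v \in nth set0 P j.
  elim=> [|m IH] k hm.
    by rewrite Lfbig ?inE //; lia.
  case: (ltnP k n) => kn; last by rewrite Lfbig ?inE.
  rewrite LfS // inE => /orP[h|h]; first by exists k; rewrite ?leqnn.
  case: (IH k.+1) => //; first by lia.
  by move=> j /andP[h1 h2] hj; exists j => //; rewrite h2 ltnW.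
pose L := [seq Lf k | k <- iota 0 n.+1].
have nthL k : nth set0 L k = Lf k.
  case: (ltnP k n.+1) => kn.
    by rewrite /L (nth_map 0) ?size_iota // nth_iota.
  by rewrite nth_default ?size_map ?size_iota // Lfbig // ltnW.
have layerE k : k < n -> layer L k = nth set0 P k.
  move=> kn; rewrite /layer !nthL (LfS _ kn); apply/setP => v; rewrite !inE.
  case: (boolP (v \in Lf k.+1)) => h /=; last by rewrite orbF.
  case: (memLf v (n - k.+1) k.+1 (leqnn _) h) => j /andP[h1 h2] hj.
  apply/esym; apply: (disjointFl (hdisj k j kn h2 _) hj).
  by rewrite neq_ltn h1.
have Lf0 : Lf 0 = VH by rewrite /Lf drop0.
have ET : E = set0.
  by apply/eqP; rewrite -subset0 -(tree_edges0); exact: hE.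
exists (VH, L); split.
- split.
    case: (boolP (r \in VH)) => hr.
      suff -> : VH = setT by exact: adm_setT.
      by apply/setP => v; rewrite inE (allq v r).
    suff -> : VH = set0 by exact: adm_set0.
    by apply/setP => v; rewrite inE (allq v r) (negbTE hr).
  split; first by split => //; rewrite ?size_map ?size_iota // nthL ?Lf0 ?Lfbig.
  split => [i _|i _]; last by rewrite !nthL.
  rewrite nthL; split; first by rewrite -Lf0.
  by move=> v w hw _; rewrite (allq v w).
- rewrite /UT /= tree_edges0 ET; congr pair; first congr pair.
    by apply/setP => e; rewrite !inE.
  apply: (eq_from_nth (x0 := set0)); first by rewrite size_map size_iota hsz.
  move=> i; rewrite size_map size_iota => hi.
  by rewrite (nth_map 0) ?size_iota // nth_iota // layerE.
- move=> i hi; rewrite /segT /= layerE //.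
  move: (hxs i hi) (hseg i hi); case: (xs i) => S L' [_ [[_ hs h0 h1] _]] /= [eS _ _].
  by case: L' hs h0 h1 => [|a [|b [|]]] //= _ -> ->; rewrite eS.
Qed.

Lemma one_relSegal fl : relSegal r p ord fl.
Proof.
move=> n hn y hy xs hxs hiso.
have hiso' i : i < n -> UT r p 1 (xs i) = segG y i.
  by move=> hi; exact: (isoG_eq (hiso i hi)).
split.
- have [x [hx hUx hseg]] := one_ex (ltnW hn) hy hxs hiso'.
  exists x; split => //; first by rewrite hUx; exact: isoG_refl.
  by move=> i hi; rewrite hseg //; exact: isoT_refl.
- move=> x x' hx hx' h1 h2 _ _.
  rewrite (one_uniq hx hx' (etrans (isoG_eq h1) (esym (isoG_eq h2)))).
  exact: isoT_refl.
Qed.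

End One.

Section Neg.
Variables (V : finType) (r : V) (p : V -> V) (ord : rel V).
Hypothesis tree : is_rooted_tree r p.

Lemma edges_sub1 (E : {set {set V}}) a : E \subset tree_edges r p ->
  [set e in E | e \subset [set a]] = set0.
Proof.
move=> hE; apply/setP => e; rewrite !inE; apply/negP => /andP[he hs].
by move: (edge_not_sub1 tree a (subsetP hE _ he)); rewrite hs.
Qed.

Lemma segUT1 (S : {set V}) : [seq layer [:: S; set0] k | k <- iota 0 1] = [:: S].
Proof. by rewrite /layer /= setD0. Qed.

Lemma three_path a b : a != b -> [set a; b] \notin tree_edges r p ->
  exists u c z, [/\ u != z, c != u, c != z, [set u; c] \in tree_edges r p &
                 [set c; z] \in tree_edges r p].
Proof.
move=> ab nE.
have gen w : w != r -> p w != r -> exists u c z, [/\ u != z, c != u, c != z,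
    [set u; c] \in tree_edges r p & [set c; z] \in tree_edges r p].
  move=> wr pwr; exists w, (p w), (p (p w)); split.
  - by rewrite eq_sym (ppw_neq tree).
  - exact: (pw_neq tree).
  - by rewrite eq_sym (pw_neq tree).
  - exact: tree_edges_in.
  - exact: tree_edges_in.
case: (boolP (a == r)) => [/eqP ar|ar].
  have br : b != r by rewrite -ar eq_sym.
  case: (boolP (p b == r)) => [/eqP pbr|pbr]; last exact: gen br pbr.
  by rewrite ar in nE; have := tree_edges_in p br; rewrite pbr setUC (negbTE nE).
case: (boolP (p a == r)) => [/eqP par|par]; last exact: gen ar par.
case: (boolP (b == r)) => [/eqP br|br].
  by rewrite br in nE; have := tree_edges_in p ar; rewrite par (negbTE nE).
case: (boolP (p b == r)) => [/eqP pbr|pbr]; last exact: gen br pbr.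
exists a, r, b; split => //.
- by rewrite eq_sym.
- by rewrite eq_sym.
- by have := tree_edges_in p ar; rewrite par.
- by have := tree_edges_in p br; rewrite pbr setUC.
Qed.

Lemma y1_nolift u c z (x : rawT V) : u != z -> c != u -> c != z ->
  validT p 2 x ->
  graph_iso (UT r p 2 x) ([set u; c; z], [set [set u; c]; [set c; z]], [:: [set c]; [set u; z]]) ->
  False.
Proof.
move=> uz cu cz; case: x => S L [_ [[_ hs h0 h2] [hlow hdec]]].
rewrite /= in hs h0 h2 hlow hdec.
rewrite /graph_iso /UT /=; move=> [phi [inj him hE hsz hP]].
have hP0 := hP 0; have hP1 := hP 1.
rewrite /= /layer h0 h2 setD0 in hP0 hP1.
set L1 := nth set0 L 1 in hP0 hP1.
have [L1S low] := hlow 1 isT.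
have A v : v \in S -> phi v = c -> v \notin L1.
  move=> vS pv; apply/negP => vL.
  have : phi v \in phi @: L1 by apply: imset_f.
  by rewrite hP1 pv !inE (negbTE cu) (negbTE cz).
have B v : v \in S -> phi v != c -> v \in L1.
  move=> vS pv; apply/negPn/negP => vL.
  have : phi v \in phi @: (S :\: L1) by apply: imset_f; rewrite inE vL.
  by rewrite hP0 inE (negbTE pv).
have edge t e' : e' \in [set [set u; c]; [set c; z]] -> e' = [set t; c] -> t != c ->
    exists w, [/\ w \in S, phi w = c & phi (p w) = t].
  move=> he' et tc; move: he'; rewrite -hE => /imsetP [e]; rewrite inE => /andP[he eS] ee.
  case/edge_inv: he => w wr ew; subst e.
  move: eS; rewrite subUset !sub1set => /andP[wS pwS].
  have i2 : phi @: [set w; p w] = [set phi w; phi (p w)] by rewrite imsetU1 imset_set1.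
  have tin : t \in [set phi w; phi (p w)].
    by rewrite -i2 -ee et !inE eqxx.
  have cin : c \in [set phi w; phi (p w)].
    by rewrite -i2 -ee et !inE eqxx orbT.
  case: (boolP (phi w == c)) => [/eqP pwc|pwc].
    exists w; split => //.
    move: tin; rewrite !inE pwc (negbTE tc) /=; by move/eqP.
  have ppw : phi (p w) = c.
    by move: cin; rewrite !inE eq_sym (negbTE pwc) /= => /eqP.
  have wL := B w wS pwc.
  have := A (p w) pwS ppw; rewrite (low (p w) w wL) //.
  split => //; split => //; exists 1; split => //.
  by case=> [|[|j]] //.
have m1 : [set u; c] \in [set [set u; c]; [set c; z]] by rewrite !inE eqxx.
have m2 : [set c; z] \in [set [set u; c]; [set c; z]] by rewrite !inE eqxx orbT.
have uc : u != c by rewrite eq_sym.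
have zc : z != c by rewrite eq_sym.
have [w1 [w1S pw1 ppw1]] := edge u [set u; c] m1 erefl uc.
have [w2 [w2S pw2 ppw2]] := edge z [set c; z] m2 (setUC _ _) zc.
have e12 : w1 = w2 by apply: inj => //; rewrite pw1 pw2.
by move: uz; rewrite -ppw1 -ppw2 e12 eqxx.
Qed.


Lemma e0 a : [set e in tree_edges r p | e \subset [set a]] = set0.
Proof. exact: edges_sub1 (subxx _). Qed.

Lemma e00 a : [set e in (set0 : {set {set V}}) | e \subset [set a]] = set0.
Proof. by apply/setP => e; rewrite !inE. Qed.

Lemma y0_lift v (vr : v != r) fl : relSegal r p ord fl ->
  exists w, [/\ w != r, p w = r & exists x, validT p 2 x /\
     isoG fl (UT r p 2 x) ([set r; w], set0, [:: [set r]; [set w]])].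
Proof.
move=> hs.
have [w [wr pw]] := child_exists tree vr.
have rw : r != w by rewrite eq_sym.
pose y0 : rawG V := ([set r; w], set0, [:: [set r]; [set w]]).
pose xs0 := fun i : nat => (if i == 0 then ([set r], [:: [set r]; set0])
                           else ([set w], [:: [set w]; set0])) : rawT V.
have hy0 : validG r p 2 y0.
  split => //.
  - exact: sub0set.
  - by move=> e; rewrite inE.
  - case=> [|[|i]] [|[|j]] //= _ _ _; rewrite disjoints1 inE //.
  - by rewrite big_cons big_cons big_nil setU0.
have hxs0 i : i < 2 -> validT p 1 (xs0 i).
  case: i => [|[|i]] //= _; rewrite /xs0 /=; (split; last exact: layering1).
    exact: adm_r tree.
  exact (adm_child tree wr pw).
have hseg0 i : i < 2 -> UT r p 1 (xs0 i) = segG y0 i.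
  case: i => [|[|i]] //= _; rewrite /xs0 /y0 /UT /segG /= ?segUT1 ?e0 ?e00 ?/layer ?setD0 //.
have [[x [hx hU _]] _] := hs 2 isT y0 hy0 xs0 hxs0
  (fun i hi => eq_ind_r (fun t => isoG fl t _) (isoG_refl _ _) (hseg0 i hi)).
by exists w; split => //; exists x.
Qed.

Lemma nseg_lab v (vr : v != r) : relSegal r p ord Labelled -> False.
Proof.
move=> hs; have [w [wr pw [x [hx hU]]]] := y0_lift vr hs.
case: x hx hU => S L hx; rewrite /= /UT /=; case => eS eE _.
have : [set w; p w] \in [set e in tree_edges r p | e \subset S].
  by rewrite inE tree_edges_in // eS pw setUC subxx.
by rewrite eE inE.
Qed.

Lemma nseg_unl v (vr : v != r) fl :
  (forall y y' : rawG V, isoG fl y y' <-> graph_iso y y') -> relSegal r p ord fl -> False.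
Proof.
move=> hfl hs.
case: (classic (exists a b, [/\ a != b, admissible p [set a; b] &
                                   [set a; b] \notin tree_edges r p])); last first.
  move=> npair; have [w [wr pw [x [hx /hfl hU]]]] := y0_lift vr hs.
  have rw : r != w by rewrite eq_sym.
  case: x hx hU => S L hx; rewrite /= /graph_iso /UT /=.
  move=> [phi [inj him hE _ _]].
  have /cards2P [a [b [ab eSab]]] : #|S| == 2.
    by rewrite -(card_in_imset inj) him cards2 rw.
  apply: npair; exists a, b; split => //; first by rewrite -eSab; case: hx.
  apply/negP => he.
  have : phi @: [set a; b] \in [set phi @: (e : {set V}) | e in [set e0 in tree_edges r p | e0 \subset S]].
    by apply: imset_f; rewrite inE he eSab subxx.
  by rewrite hE inE.
move=> [a [b [ab adm nE]]].
have [u [c [z [uz cu cz huc hcz]]]] := three_path ab nE.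
pose y1 : rawG V := ([set u; c; z], [set [set u; c]; [set c; z]], [:: [set c]; [set u; z]]).
pose xs1 := fun i : nat => (if i == 0 then ([set r], [:: [set r]; set0])
                           else ([set a; b], [:: [set a; b]; set0])) : rawT V.
have hE1 : [set [set u; c]; [set c; z]] \subset tree_edges r p.
  by apply/subsetP => e; rewrite !inE => /orP[] /eqP ->.
have hy1 : validG r p 2 y1.
  split => //.
  - move=> e; rewrite !inE => /orP[] /eqP ->; rewrite subUset !sub1set !inE !eqxx ?orbT //.
  - case=> [|[|i]] [|[|j]] //= _ _ _; rewrite ?disjoints1 1?disjoint_sym ?disjoints1 !inE negb_or cu cz //.
  - rewrite big_cons big_cons big_nil; apply/setP => t; rewrite !inE.
    by case: (t == u); case: (t == c); case: (t == z).
have hxs1 i : i < 2 -> validT p 1 (xs1 i).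
  case: i => [|[|i]] //= _; rewrite /xs1 /=; (split; last exact: layering1).
    exact: adm_r tree.
  exact: adm.
have ba : b != a by rewrite eq_sym.
have hiso1 i : i < 2 -> isoG fl (UT r p 1 (xs1 i)) (segG y1 i).
  move=> hi; apply/hfl; move: hi.
  case: i => [|[|i]] //= _; rewrite /xs1 /y1 /UT /segG /= ?segUT1.
    rewrite e0 (edges_sub1 c hE1).
    exists (fun _ => c); split => //.
    - by move=> x1 x2; rewrite !inE => /eqP -> /eqP ->.
    - by rewrite imset_set1.
    - by rewrite imset0.
    - by case=> [|k] /=; [rewrite /layer setD0 imset_set1 | rewrite nth_nil imset0].
  have EL : [set e in tree_edges r p | e \subset [set a; b]] = set0.
    apply/setP => e; rewrite !inE; apply/negP => /andP [he hs'].
    by move: nE; rewrite -(edge_sub2 tree he hs') he.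
  have ER : [set e in [set [set u; c]; [set c; z]] | e \subset [set u; z]] = set0.
    apply/setP => e; rewrite !inE; apply/negP => /andP[/orP[]/eqP -> ];
    by rewrite subUset !sub1set !inE (negbTE cu) (negbTE cz) ?andbF.
  rewrite EL ER; exists (fun t => if t == a then u else z); split => //.
  - move=> x1 x2; rewrite !inE => /orP[]/eqP-> /orP[]/eqP->; rewrite /= ?eqxx ?(negbTE ba) //;
    by move=> e; move: uz; rewrite e eqxx.
  - by rewrite imsetU1 imset_set1 /= eqxx (negbTE ba).
  - by rewrite imset0.
  - by case=> [|k] /=; [rewrite /layer setD0 imsetU1 imset_set1 /= eqxx (negbTE ba) | rewrite ?nth_nil imset0].
have [[x1 [hx1 /hfl hU1 _]] _] := hs 2 isT y1 hy1 xs1 hxs1 hiso1.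
exact: y1_nolift uz cu cz hx1 hU1.
Qed.

Lemma nseg v (vr : v != r) fl : relSegal r p ord fl -> False.
Proof.
case: fl; first exact: nseg_lab vr.
- by move=> hs; exact: (@nseg_unl v vr UnlabelledPlanar (fun y y' => iff_refl _) hs).
- by move=> hs; exact: (@nseg_unl v vr UnlabelledNonPlanar (fun y y' => iff_refl _) hs).
Qed.

End Neg.

Theorem mainTheorem7 (V : finType) (r : V) (p : V -> V) (ord : rel V)
  (fl : flavor) :
  is_rooted_tree r p ->
  (fl = UnlabelledPlanar -> planar_structure r p ord) ->
  (relSegal r p ord fl <-> #|V| = 1).
Proof.
move=> tree _; split.
- move=> hs; apply/eqP/fintype1P; exists r => v.
  by apply/eqP/negPn/negP => vr; exact: (nseg tree vr hs).
- move=> h1; case: (fintype1 h1) => x0 hx0; apply: one_relSegal => u v.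
  by rewrite (hx0 u) (hx0 v).
Qed.
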